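(* The reactivity problem for DSRT (given a deterministic SRT $\mathcal{S}$, decide whether $\mathcal{S}$ is reactive) is undecidable.
   Context: A linear group is a triple $\mathbf{G}=(D,\leq,+)$ where $D$ is an infinite set, $\leq$ is a total order on $D$, and $(D,+)$ is a group with identity $0$. For finite label sets $\Sigma,\Gamma$, a $(\Sigma,\Gamma,\mathbf{G})$-SRT is a tuple $\mathcal{S}=(Q,q_0,k,R_0,\Delta)$: $Q$ finite set of states, $q_0\in Q$, $k\in\mathbb{N}$ registers, initial values $R_0\in D^k$, transitions $\Delta\subseteq Q\times\Sigma\times\{>,=,<\}^k\times\{\mathsf{old},\mathsf{new},\mathsf{add}\}^k\times\{1,\dots,k\}\times\Gamma\times Q$. A transition $(q,\sigma,l,m,u,\gamma,q')$ enables the step $(q,R)\xrightarrow[(\gamma,d')]{(\sigma,d)}(q',R')$ iff (1) for every $i$, $d>R[i]$, $d=R[i]$ or $d<R[i]$ according as $l[i]$ is $>$, $=$, $<$; (2) $R'[i]=R[i]$, $d$, or $R[i]+d$ according as $m[i]$ is $\mathsf{old}$, $\mathsf{new}$, $\mathsf{add}$; (3) $d'=R'[u]$. A run over $s\in(\Sigma\times D)^*$ of length $n$ generating $t\in(\Gamma\times D)^*$ is a sequence of $n$ enabled steps from $(q_0,R_0)$ reading $s[i]$ and emitting $t[i]$. $s\otimes t$ is the word with $i$-th letter $(s[i],t[i])$; $[\![\mathcal{S}]\!]=\{s\otimes t:\text{there is a run over }s\text{ generating }t\}$. An SRT is deterministic (DSRT) if any two distinct transitions $(q_1,\sigma_1,l_1,\dots)$,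 $(q_2,\sigma_2,l_2,\dots)$ satisfy $q_1\neq q_2$ or $\sigma_1\neq\sigma_2$ or $l_1\neq l_2$. $\mathcal{S}$ is reactive if for every $s\in(\Sigma\times D)^*$ there exists $t$ with $s\otimes t\in[\![\mathcal{S}]\!]$. *)

(* Defs.v *)
From Stdlib Require Import ZArith List Arith.
Import ListNotations.
Open Scope Z_scope.

Inductive cmp : Type := CGt | CEq | CLt.
Inductive upd : Type := UOld | UNew | UAdd.

(* States are 0..nQ-1, input labels 0..nSig-1 (= Sigma), output labels
   0..nGam-1 (= Gamma), registers are indexed 0..k-1 (so the output register
   u ranges over {0,...,k-1}, i.e. the paper's {1,...,k} shifted by one). *)
Record trans : Type := mkTrans {
  t_src : nat;
  t_in : nat;
  t_test : list cmp;
  t_upd : list upd;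
  t_out_reg : nat;
  t_out : nat;
  t_dst : nat }.

Record SRT : Type := mkSRT {
  nQ : nat;
  nSig : nat;
  nGam : nat;
  q0 : nat;
  nreg : nat;
  R0 : list Z;
  Delta : list trans }.

Definition wf_SRT (S : SRT) : Prop :=
  (q0 S < nQ S)%nat /\ length (R0 S) = nreg S /\
  Forall (fun t =>
    (t_src t < nQ S)%nat /\ (t_in t < nSig S)%nat /\
    length (t_test t) = nreg S /\ length (t_upd t) = nreg S /\
    (t_out_reg t < nreg S)%nat /\ (t_out t < nGam S)%nat /\
    (t_dst t < nQ S)%nat) (Delta S).

Definition deterministic (S : SRT) : Prop :=
  forall t1 t2, In t1 (Delta S) -> In t2 (Delta S) -> t1 <> t2 ->
    (t_src t1, t_in t1, t_test t1) <> (t_src t2, t_in t2, t_test t2).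

Definition cmp_ok (c : cmp) (r d : Z) : Prop :=
  match c with
  | CGt => d > r
  | CEq => d = r
  | CLt => d < r
  end.

Definition tests_ok (l : list cmp) (R : list Z) (d : Z) : Prop :=
  Forall2 (fun c r => cmp_ok c r d) l R.

Definition upd_val (m : upd) (r d : Z) : Z :=
  match m with
  | UOld => r
  | UNew => d
  | UAdd => r + d
  end.

Definition update (m : list upd) (R : list Z) (d : Z) : list Z :=
  map (fun p => upd_val (fst p) (snd p) d) (combine m R).

Definition config : Type := (nat * list Z)%type.

Definition step (S : SRT) (c : config) (a : nat * Z) (b : nat * Z)
    (c' : config) : Prop :=
  exists t, In t (Delta S) /\
    t_src t = fst c /\ t_in t = fst a /\
    length (t_test t) = length (snd c) /\
    tests_ok (t_test t) (snd c) (snd a) /\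
    length (t_upd t) = length (snd c) /\
    snd c' = update (t_upd t) (snd c) (snd a) /\
    snd b = nth (t_out_reg t) (snd c') 0 /\
    fst b = t_out t /\ fst c' = t_dst t.

Inductive run_from (S : SRT) : config -> list (nat * Z) -> list (nat * Z) -> Prop :=
  | run_nil c : run_from S c [] []
  | run_cons c a b c' s t :
      step S c a b c' -> run_from S c' s t -> run_from S c (a :: s) (b :: t).

Definition sem (S : SRT) (w : list ((nat * Z) * (nat * Z))) : Prop :=
  run_from S (q0 S, R0 S) (map fst w) (map snd w).

Definition reactive (S : SRT) : Prop :=
  forall s : list (nat * Z), Forall (fun a => (fst a < nSig S)%nat) s ->
    exists t : list (nat * Z), length t = length s /\ sem S (combine s t).

Inductive rf : Type :=
  | RZero : rf
  | RSucc : rf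
  | RProj : nat -> rf
  | RComp : rf -> list rf -> rf
  | RPrim : rf -> rf -> rf
  | RMu : rf -> rf.

Inductive eval : rf -> list nat -> nat -> Prop :=
  | ev_zero v : eval RZero v 0
  | ev_succ v : eval RSucc v (S (hd 0%nat v))
  | ev_proj i v : eval (RProj i) v (nth i v 0%nat)
  | ev_comp f gs v ys y : evals gs v ys -> eval f ys y -> eval (RComp f gs) v y
  | ev_prim0 f g v y : eval f v y -> eval (RPrim f g) (0%nat :: v) y
  | ev_primS f g n v z y :
      eval (RPrim f g) (n :: v) z -> eval g (n :: z :: v) y ->
      eval (RPrim f g) (S n :: v) y
  | ev_mu f v n :
      eval f (n :: v) 0%nat ->
      (forall m, (m < n)%nat -> exists k, eval f (m :: v) (S k)) ->
      eval (RMu f) v n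
with evals : list rf -> list nat -> list nat -> Prop :=
  | evs_nil v : evals [] v []
  | evs_cons g gs v y ys : eval g v y -> evals gs v ys -> evals (g :: gs) v (y :: ys).

(* Cantor pairing *)
Definition npair (x y : nat) : nat := ((x + y) * (x + y + 1)) / 2 + y.

Fixpoint enc_list {A} (e : A -> nat) (l : list A) : nat :=
  match l with
  | [] => 0
  | x :: l' => S (npair (e x) (enc_list e l'))
  end.

(* zig-zag encoding of integers *)
Definition enc_Z (z : Z) : nat :=
  if Z.leb 0 z then (2 * Z.to_nat z)%nat else (2 * Z.to_nat (- z) - 1)%nat.

Definition enc_cmp (c : cmp) : nat := match c with CGt => 0 | CEq => 1 | CLt => 2 end.
Definition enc_upd (m : upd) : nat := match m with UOld => 0 | UNew => 1 | UAdd => 2 end.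

Definition enc_trans (t : trans) : nat :=
  enc_list (fun x => x)
    [t_src t; t_in t; enc_list enc_cmp (t_test t); enc_list enc_upd (t_upd t);
     t_out_reg t; t_out t; t_dst t].

Definition encode_SRT (S : SRT) : nat :=
  enc_list (fun x => x)
    [nQ S; nSig S; nGam S; q0 S; nreg S; enc_list enc_Z (R0 S);
     enc_list enc_trans (Delta S)].

(* Main.v *)
Require Import Defs.
From Stdlib Require Import ZArith List Arith Lia.
Import ListNotations.
Open Scope nat_scope.


Definition rf_ind' (Pr : rf -> Prop) (H0 : Pr RZero) (H1 : Pr RSucc)
  (H2 : forall i, Pr (RProj i))
  (H3 : forall f gs, Pr f -> Forall Pr gs -> Pr (RComp f gs))
  (H4 : forall f g, Pr f -> Pr g -> Pr (RPrim f g))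
  (H5 : forall f, Pr f -> Pr (RMu f)) : forall f, Pr f :=
  fix F f := match f with
  | RZero => H0 | RSucc => H1 | RProj i => H2 i
  | RComp f gs => H3 f gs (F f)
      ((fix G gs := match gs return Forall Pr gs with
        | [] => Forall_nil Pr
        | g :: gs' => @Forall_cons _ Pr g gs' (F g) (G gs') end) gs)
  | RPrim f g => H4 f g (F f) (F g)
  | RMu f => H5 f (F f) end.

Lemma evals_det gs : Forall (fun f => forall v y y', eval f v y -> eval f v y' -> y = y') gs ->
  forall v ys ys', evals gs v ys -> evals gs v ys' -> ys = ys'.
Proof.
  induction 1; intros v ys ys' H1 H2; inversion H1; inversion H2; subst; auto.
  f_equal; eauto.
Qed.

Lemma eval_det : forall f v y y', eval f v y -> eval f v y' -> y = y'.
Proof.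
  induction f using rf_ind'; intros v y y' H1 H2.
  - inversion H1; inversion H2; subst; auto.
  - inversion H1; inversion H2; subst; auto.
  - inversion H1; inversion H2; subst; auto.
  - inversion H1; inversion H2; subst.
    assert (ys = ys0) by (eapply evals_det; eauto). subst. eauto.
  - destruct v as [|n v]; [inversion H1|].
    revert y y' H1 H2. induction n; intros y y' H1 H2.
    + inversion H1; inversion H2; subst; eauto.
    + inversion H1; inversion H2; subst.
      assert (z = z0) by eauto. subst. eauto.
  - inversion H1; inversion H2; subst.
    destruct (lt_eq_lt_dec y y') as [[Hl|He]|Hl]; auto.
    + destruct (H8 _ Hl) as [k Hk]. specialize (IHf _ _ _ H0 Hk). discriminate.
    + destruct (H3 _ Hl) as [k Hk]. specialize (IHf _ _ _ H7 Hk). discriminate.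
Qed.

Lemma ev_proj' i v y : nth i v 0%nat = y -> eval (RProj i) v y.
Proof. intros <-. constructor. Qed.
Lemma ev_succ' v y : y = S (hd 0%nat v) -> eval RSucc v y.
Proof. intros ->. constructor. Qed.

Lemma ev_comp1 f g v a y : eval g v a -> eval f [a] y -> eval (RComp f [g]) v y.
Proof. intros. econstructor; [|eauto]. repeat constructor; auto. Qed.
Lemma ev_comp2 f g h v a b y : eval g v a -> eval h v b -> eval f [a;b] y ->
  eval (RComp f [g;h]) v y.
Proof. intros. econstructor; [|eauto]. repeat constructor; auto. Qed.

Definition add_rf := RPrim (RProj 0) (RComp RSucc [RProj 1]).
Lemma ev_add x y : eval add_rf [x; y] (x + y)%nat.
Proof.
  induction x.
  - constructor. apply ev_proj'. reflexivity.
  - econstructor; [exact IHx|]. eapply ev_comp1.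
    + apply ev_proj'. reflexivity.
    + apply ev_succ'. reflexivity.
Qed.

Fixpoint tri (n : nat) : nat := match n with 0 => 0 | S m => (S m + tri m)%nat end.
Definition tri_rf := RPrim RZero (RComp add_rf [RComp RSucc [RProj 0]; RProj 1]).
Lemma ev_tri n : eval tri_rf [n] (tri n).
Proof.
  induction n.
  - constructor. constructor.
  - econstructor; [exact IHn|]. eapply ev_comp2; [| |apply ev_add].
    + eapply ev_comp1; [apply ev_proj'; reflexivity| apply ev_succ'; reflexivity].
    + apply ev_proj'; reflexivity.
Qed.

Lemma tri2 n : (tri n * 2 = n * (n + 1))%nat.
Proof. induction n; simpl; lia. Qed.

Lemma npair_tri x y : npair x y = (tri (x + y) + y)%nat.
Proof.
  unfold npair. f_equal. rewrite <- tri2. apply Nat.div_mul. lia.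
Qed.

Definition npair_rf := RComp add_rf [RComp tri_rf [add_rf]; RProj 1].
Lemma ev_npair x y : eval npair_rf [x; y] (npair x y).
Proof.
  rewrite npair_tri. eapply ev_comp2; [| |apply ev_add].
  - eapply ev_comp1; [apply ev_add| apply ev_tri].
  - apply ev_proj'; reflexivity.
Qed.

Fixpoint cst (c : nat) : rf := match c with 0 => RZero | S c' => RComp RSucc [cst c'] end.
Lemma ev_cst c v : eval (cst c) v c.
Proof.
  induction c; simpl. constructor. eapply ev_comp1; [exact IHc| apply ev_succ'; reflexivity].
Qed.

Definition cons_rf F G := RComp RSucc [RComp npair_rf [F; G]].
Lemma ev_cons F G v a b : eval F v a -> eval G v b -> eval (cons_rf F G) v (S (npair a b)).
Proof.
  intros. eapply ev_comp1; [eapply ev_comp2; [eauto|eauto|apply ev_npair]| apply ev_succ'; reflexivity].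
Qed.

Definition dbl F := RComp add_rf [F; F].
Lemma ev_dbl F v a : eval F v a -> eval (dbl F) v (2 * a)%nat.
Proof. intros. eapply ev_comp2; eauto. replace (2*a)%nat with (a+a)%nat by lia. apply ev_add. Qed.

Definition zeros_rf := RPrim (cst 34) (cons_rf RZero (RProj 1)).
Fixpoint zz (k : nat) : nat := match k with 0 => 34%nat | S k' => S (npair 0 (zz k')) end.
Lemma ev_zeros k : eval zeros_rf [k] (zz k).
Proof.
  induction k.
  - constructor. apply ev_cst.
  - econstructor; [exact IHk|]. apply ev_cons; [constructor| apply ev_proj'; reflexivity].
Qed.

Definition R0rf := cons_rf (cst 0) (cons_rf (dbl (RProj 0)) (cons_rf (dbl (RProj 1))
  (cons_rf (dbl (RProj 2)) (cons_rf (dbl (RProj 3)) (RComp zeros_rf [RProj 3]))))).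
Definition Enc := cons_rf (RProj 0) (cons_rf (cst 1) (cons_rf (cst 1) (cons_rf (cst 0)
  (cons_rf (RProj 1) (cons_rf R0rf (cons_rf (RProj 2) (cst 0))))))).

Definition encv (a1 a2 a3 a4 : nat) : nat :=
  enc_list (fun x => x) [a1; 1%nat; 1%nat; 0%nat; a2;
    enc_list enc_Z (map Z.of_nat [0%nat; a1; a2; a3; a4] ++ repeat 0%Z a4 ++ [1%Z; (-1)%Z; 0%Z]); a3].

Lemma enc_Z_nat a : enc_Z (Z.of_nat a) = (2 * a)%nat.
Proof.
  unfold enc_Z. replace (0 <=? Z.of_nat a)%Z with true by (symmetry; apply Z.leb_le; lia).
  rewrite Nat2Z.id. reflexivity.
Qed.

Lemma zz_enc k : enc_list enc_Z (repeat 0%Z k ++ [1%Z; (-1)%Z; 0%Z]) = zz k.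
Proof.
  induction k.
  - vm_compute. reflexivity.
  - simpl. rewrite IHk. reflexivity.
Qed.

Lemma ev_Enc a1 a2 a3 a4 : eval Enc [a1; a2; a3; a4] (encv a1 a2 a3 a4).
Proof.
  unfold Enc, encv. simpl enc_list.
  repeat rewrite enc_Z_nat. rewrite zz_enc.
  repeat (apply ev_cons).
  all: try (apply ev_proj'; reflexivity).
  all: try (apply ev_cst).
  all: try (apply ev_dbl; apply ev_proj'; reflexivity).
  - unfold R0rf. change (enc_Z 0%Z) with 0%nat. repeat (apply ev_cons).
    all: try apply ev_cst.
    all: try (apply ev_dbl; apply ev_proj'; reflexivity).
    eapply ev_comp1; [apply ev_proj'; reflexivity| apply ev_zeros].
Qed.


Inductive instr : Type := INC (r : nat) | JZ (r j : nat).
Definition regs := nat -> nat.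
Definition updr (R : regs) r x : regs := fun i => if Nat.eqb i r then x else R i.
Definition cfg := (nat * regs)%type.

Inductive rstep (P : list instr) : cfg -> cfg -> Prop :=
| st_inc pc R r : nth_error P pc = Some (INC r) -> rstep P (pc, R) (S pc, updr R r (S (R r)))
| st_jz0 pc R r j : nth_error P pc = Some (JZ r j) -> R r = 0 -> rstep P (pc, R) (j, R)
| st_jzS pc R r j k : nth_error P pc = Some (JZ r j) -> R r = S k -> rstep P (pc, R) (S pc, updr R r k).

Inductive rsteps (P : list instr) : cfg -> cfg -> Prop :=
| rs_refl c : rsteps P c c
| rs_step c1 c2 c3 : rstep P c1 c2 -> rsteps P c2 c3 -> rsteps P c1 c3.

Lemma rsteps_trans P c1 c2 c3 : rsteps P c1 c2 -> rsteps P c2 c3 -> rsteps P c1 c3.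
Proof. induction 1; intros; auto. econstructor; eauto. Qed.

Lemma upd_same R r x : updr R r x r = x.
Proof. unfold updr. rewrite Nat.eqb_refl. auto. Qed.
Lemma upd_other R r x i : i <> r -> updr R r x i = R i.
Proof. unfold updr. intros H. apply Nat.eqb_neq in H. rewrite H. auto. Qed.

Definition code_at (P : list instr) pc c := forall i x, nth_error c i = Some x -> nth_error P (pc + i) = Some x.

Lemma code_at_l P pc a b : code_at P pc (a ++ b) -> code_at P pc a.
Proof. intros H i x E. apply H. rewrite nth_error_app1; auto. apply nth_error_Some. congruence. Qed.
Lemma code_at_r P pc a b : code_at P pc (a ++ b) -> code_at P (pc + length a) b.
Proof. intros H i x E. rewrite <- Nat.add_assoc. apply H. rewrite nth_error_app2 by lia.
  replace (length a + i - length a) with i by lia. auto. Qed.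
Lemma code_at_eq P pc pc' c : code_at P pc c -> pc = pc' -> code_at P pc' c.
Proof. intros; subst; auto. Qed.

Lemma s_inc P pc pc' R r : nth_error P pc = Some (INC r) -> pc' = S pc ->
  rsteps P (pc, R) (pc', updr R r (S (R r))).
Proof. intros; subst. econstructor; [constructor; eauto| constructor]. Qed.
Lemma s_jz0 P pc R r j : nth_error P pc = Some (JZ r j) -> R r = 0 -> rsteps P (pc, R) (j, R).
Proof. intros. econstructor; [eapply st_jz0; eauto| constructor]. Qed.
Lemma s_jzS P pc pc' R r j k : nth_error P pc = Some (JZ r j) -> R r = S k -> pc' = S pc ->
  rsteps P (pc, R) (pc', updr R r k).
Proof. intros; subst. econstructor; [eapply st_jzS; eauto| constructor]. Qed.

Ltac inst H i := let E := fresh "E" in pose proof (H i _ eq_refl) as E; simpl in E.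
Ltac supd := unfold updr in *; repeat match goal with |- context[Nat.eqb ?a ?b] =>
  destruct (Nat.eqb_spec a b); try (exfalso; congruence); try (exfalso; lia) end.

Definition clr r pc := [JZ r (pc + 2); JZ 0 pc].
Lemma clr_ok P pc r R : code_at P pc (clr r pc) -> R 0 = 0 -> r <> 0 ->
  exists R', rsteps P (pc, R) (pc + 2, R') /\ R' r = 0 /\ forall x, x <> r -> R' x = R x.
Proof.
  intros Hc. inst Hc 0. inst Hc 1. rewrite Nat.add_0_r in E.
  remember (R r) as m. revert R Heqm. induction m; intros R Hm H0 Hr.
  - exists R. split; [apply s_jz0 with r; auto|auto].
  - destruct (IHm (updr R r m)) as [R' [H1 [H2 H3]]]; [supd; auto..|].
    exists R'. split; [|split; auto].
    + eapply rsteps_trans. apply s_jzS with (r := r) (j := pc + 2) (k := m) (pc' := pc + 1); [exact E|auto|lia].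
      eapply rsteps_trans. apply s_jz0 with (r := 0) (j := pc); [exact E0|supd; auto]. exact H1.
    + intros x Hx. rewrite H3; auto. supd; auto.
Qed.

Definition mov src dst pc := [JZ src (pc + 3); INC dst; JZ 0 pc].
Lemma mov_ok P pc src dst R : code_at P pc (mov src dst pc) -> R 0 = 0 -> src <> dst -> src <> 0 -> dst <> 0 ->
  exists R', rsteps P (pc, R) (pc + 3, R') /\ R' src = 0 /\ R' dst = R dst + R src /\
    forall x, x <> src -> x <> dst -> R' x = R x.
Proof.
  intros Hc. inst Hc 0. inst Hc 1. inst Hc 2. rewrite Nat.add_0_r in E.
  remember (R src) as m. revert R Heqm. induction m; intros R Hm H0 Hsd Hs Hd.
  - exists R. split; [apply s_jz0 with src; auto|split; auto].
  - set (R1 := updr R src m). set (R2 := updr R1 dst (S (R1 dst))).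
    destruct (IHm R2) as [R' [H1 [H2 [H3 H4]]]]; [unfold R2, R1; supd; auto..|].
    exists R'. split; [|split; [auto|split]].
    + eapply rsteps_trans. apply s_jzS with (r := src) (j := pc + 3) (k := m) (pc' := pc + 1); [exact E|auto|lia].
      eapply rsteps_trans. apply s_inc with (r := dst) (pc' := pc + 2); [exact E0|lia].
      eapply rsteps_trans. apply s_jz0 with (r := 0) (j := pc); [exact E1|supd; auto]. exact H1.
    + rewrite H3. unfold R2, R1. supd; lia.
    + intros x Hx1 Hx2. rewrite H4; auto. unfold R2, R1. supd; auto.
Qed.

Definition copy src dst tmp pc :=
  clr dst pc ++ clr tmp (pc + 2) ++ [JZ src (pc + 8); INC dst; INC tmp; JZ 0 (pc + 4)] ++ mov tmp src (pc + 8).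

Lemma copy_len src dst tmp pc : length (copy src dst tmp pc) = 11.
Proof. reflexivity. Qed.

Lemma copy_loop P pc src dst tmp : code_at P pc (copy src dst tmp pc) ->
  src <> dst -> src <> tmp -> dst <> tmp -> src <> 0 -> dst <> 0 -> tmp <> 0 ->
  forall m R, R src = m -> R 0 = 0 ->
  exists R', rsteps P (pc + 4, R) (pc + 8, R') /\ R' src = 0 /\ R' dst = R dst + m /\
    R' tmp = R tmp + m /\ forall x, x <> src -> x <> dst -> x <> tmp -> R' x = R x.
Proof.
  intros Hc Hsd Hst Hdt Hs Hd Ht. inst Hc 4. inst Hc 5. inst Hc 6. inst Hc 7.
  induction m; intros R Hm H0.
  - exists R. split; [apply s_jz0 with src; auto|]. repeat split; auto; try lia.
  - set (R1 := updr R src m). set (R2 := updr R1 dst (S (R1 dst))). set (R3 := updr R2 tmp (S (R2 tmp))).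
    destruct (IHm R3) as [R' [H1 [H2 [H3 [H4 H5]]]]]; [unfold R3, R2, R1; supd; auto..|].
    exists R'. split; [|split; [auto|split; [|split]]].
    + eapply rsteps_trans. apply s_jzS with (r := src) (j := pc + 8) (k := m) (pc' := pc + 5); [exact E|auto|lia].
      eapply rsteps_trans. apply s_inc with (r := dst) (pc' := pc + 6); [exact E0|lia].
      eapply rsteps_trans. apply s_inc with (r := tmp) (pc' := pc + 7); [exact E1|lia].
      eapply rsteps_trans. apply s_jz0 with (r := 0) (j := pc + 4); [exact E2|supd; auto]. exact H1.
    + rewrite H3. unfold R3, R2, R1. supd; lia.
    + rewrite H4. unfold R3, R2, R1. supd; lia.
    + intros x Hx1 Hx2 Hx3. rewrite H5; auto. unfold R3, R2, R1. supd; auto.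
Qed.

Lemma copy_ok P pc src dst tmp R : code_at P pc (copy src dst tmp pc) ->
  src <> dst -> src <> tmp -> dst <> tmp -> src <> 0 -> dst <> 0 -> tmp <> 0 -> R 0 = 0 ->
  exists R', rsteps P (pc, R) (pc + 11, R') /\ R' dst = R src /\ R' src = R src /\
    forall x, x <> dst -> x <> tmp -> R' x = R x.
Proof.
  intros Hc Hsd Hst Hdt Hs Hd Ht H0.
  pose proof (copy_loop P pc src dst tmp Hc Hsd Hst Hdt Hs Hd Ht) as Hl.
  unfold copy in Hc.
  pose proof (code_at_l _ _ _ _ Hc) as C1.
  pose proof (code_at_r _ _ _ _ Hc) as C2. simpl length in C2.
  pose proof (code_at_l _ _ _ _ C2) as C3.
  pose proof (code_at_r _ _ _ _ C2) as C4. simpl length in C4.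
  pose proof (code_at_r _ _ _ _ C4) as C5. simpl length in C5.
  destruct (clr_ok P pc dst R C1 H0 Hd) as [R1 [S1 [A1 B1]]].
  destruct (clr_ok P (pc + 2) tmp R1 C3) as [R2 [S2 [A2 B2]]]; auto. rewrite B1; auto.
  destruct (Hl (R2 src) R2) as [R3 [S3 [A3 [B3 [D3 E3]]]]]; auto. rewrite B2, B1; auto.
  destruct (mov_ok P (pc + 8) tmp src R3) as [R4 [S4 [A4 [B4 D4]]]]; auto.
  { eapply code_at_eq; [exact C5|]. lia. }
  { rewrite E3, B2, B1; auto. }
  exists R4. split; [|split; [|split]].
  - eapply rsteps_trans; [exact S1|].
    eapply rsteps_trans. replace (pc + 2 + 2) with (pc + 4) in S2 by lia. exact S2.
    eapply rsteps_trans; [exact S3|]. replace (pc + 11) with (pc + 8 + 3) by lia. exact S4.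
  - rewrite D4 by auto. rewrite B3, (B2 dst), (B2 src), A1, (B1 src) by auto. lia.
  - rewrite B4, A3, D3, A2, (B2 src), (B1 src) by auto. lia.
  - intros x Hx1 Hx2. destruct (Nat.eq_dec x src).
    + subst. rewrite B4, A3, D3, A2, (B2 src), (B1 src) by auto. lia.
    + rewrite D4, E3, B2, B1 by auto. auto.
Qed.


Definition getarg n inp i out fr pc := if i <? n then copy (inp + i) out fr pc else clr out pc.

Fixpoint compl (F : rf -> nat -> nat -> list instr) (gs : list rf) (base pc : nat) : list instr :=
  match gs with
  | [] => []
  | g :: gs' => F g base pc ++ compl F gs' (S base) (pc + length (F g base pc))
  end.

Fixpoint copies n inp (is : list nat) base fr pc : list instr :=
  match is with
  | [] => []
  | i :: is' => getarg n inp i base fr pc ++ copies n inp is' (S base) fr (pc + length (getarg n inp i base fr pc))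
  end.

Definition prim_code (cf cg : nat -> list instr) (n n' inp out fr pc : nat) : list instr :=
  let fr' := fr + n + 3 in
  let c1 := copies n inp (seq 1 n') (fr + 2) fr' pc in
  let p2 := pc + length c1 in
  let p4 := p2 + 13 in
  let lp := p4 + length (cf p4) in
  let p7 := S lp + length (cg (S lp)) in
  c1 ++ copy inp (fr + n + 1) fr' p2 ++ clr fr (p2 + 11) ++ cf p4 ++ [JZ (fr + n + 1) (p7 + 7)] ++
  cg (S lp) ++ clr (S fr) p7 ++ mov (fr + n + 2) (S fr) (p7 + 2) ++ [INC fr; JZ 0 lp] ++
  copy (S fr) out fr' (p7 + 7).

Definition mu_code (cf : nat -> list instr) n inp out fr pc :=
  let fr' := fr + n + 2 in
  let c1 := copies n inp (seq 0 n) (S fr) fr' pc in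
  let lp := pc + length c1 + 2 in
  let p4 := lp + length (cf lp) in
  c1 ++ clr fr (pc + length c1) ++ cf lp ++ [JZ (fr + n + 1) (p4 + 3); INC fr; JZ 0 lp] ++
  copy fr out fr' (p4 + 3).

Fixpoint comp (f : rf) (n inp out fr pc : nat) {struct f} : list instr :=
  match f with
  | RZero => clr out pc
  | RSucc => getarg n inp 0 out fr pc ++ [INC out]
  | RProj i => getarg n inp i out fr pc
  | RComp h gs =>
      let cg := compl (fun g b p => comp g n inp b (fr + length gs) p) gs fr pc in
      cg ++ comp h (length gs) fr out (fr + length gs) (pc + length cg)
  | RPrim f g => match n with
      | 0 => []
      | S n' => prim_code (fun p => comp f n' (fr + 2) (S fr) (fr + n + 3) p)
                          (fun p => comp g (S n) fr (fr + n + 2) (fr + n + 3) p) n n' inp out fr pc end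
  | RMu f => mu_code (fun p => comp f (S n) fr (fr + n + 1) (fr + n + 2) p) n inp out fr pc
  end.


Lemma getarg_ok P n inp i out fr pc R v : length v = n -> 0 < inp -> inp + n <= fr -> out < fr -> 0 < out ->
  (out < inp \/ inp + n <= out) -> R 0 = 0 -> (forall k, k < n -> R (inp + k) = nth k v 0) ->
  code_at P pc (getarg n inp i out fr pc) ->
  exists R', rsteps P (pc, R) (pc + length (getarg n inp i out fr pc), R') /\ R' out = nth i v 0 /\
    forall x, x <> out -> x <> fr -> R' x = R x.
Proof.
  intros Hl Hi Hf Ho Ho0 Hd H0 Hin Hc. unfold getarg in *. destruct (Nat.ltb_spec i n).
  - destruct (copy_ok P pc (inp + i) out fr R Hc) as [R' [S1 [A1 [B1 C1]]]]; try lia; auto.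
    exists R'. rewrite copy_len. split; auto. split; auto. rewrite A1. auto.
  - destruct (clr_ok P pc out R Hc) as [R' [S1 [A1 B1]]]; try lia; auto.
    exists R'. split; auto. split; auto. rewrite nth_overflow; auto. lia.
Qed.

Lemma copies_ok P n inp fr v : length v = n -> 0 < inp ->
  forall is base pc R, inp + n <= base -> base + length is <= fr -> R 0 = 0 ->
  (forall k, k < n -> R (inp + k) = nth k v 0) ->
  code_at P pc (copies n inp is base fr pc) ->
  exists R', rsteps P (pc, R) (pc + length (copies n inp is base fr pc), R') /\
    (forall j, j < length is -> R' (base + j) = nth (nth j is 0) v 0) /\
    forall x, x <> fr -> (x < base \/ base + length is <= x) -> R' x = R x.
Proof.
  intros Hl Hi is. induction is as [|i is IH]; intros base pc R Hb Hbf H0 Hin Hc.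
  - exists R. simpl. rewrite Nat.add_0_r. split; [constructor|]. split; intros; auto. simpl in *; lia.
  - simpl in Hc. simpl length in Hbf.
    destruct (getarg_ok P n inp i base fr pc R v) as [R1 [S1 [A1 B1]]]; auto; try lia.
    { eapply code_at_l; eauto. }
    destruct (IH (S base) (pc + length (getarg n inp i base fr pc)) R1) as [R2 [S2 [A2 B2]]]; try lia.
    { rewrite B1; auto; lia. }
    { intros k Hk. rewrite B1; try lia. auto. }
    { eapply code_at_r; eauto. }
    exists R2. split; [|split].
    + simpl. rewrite length_app, Nat.add_assoc. eapply rsteps_trans; eauto.
    + intros j Hj. destruct j.
      * rewrite B2 by lia. rewrite Nat.add_0_r. auto.
      * simpl. rewrite <- A2 by (simpl in Hj; lia). f_equal. lia.
    + intros x Hx Hx2. simpl length in Hx2. rewrite B2 by lia. rewrite B1 by lia. auto.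
Qed.

Definition Spec (f : rf) := forall P n inp out fr pc R v y,
  eval f v y -> length v = n -> 0 < inp -> inp + n <= fr -> out < fr -> 0 < out ->
  (out < inp \/ inp + n <= out) -> R 0 = 0 ->
  (forall i, i < n -> R (inp + i) = nth i v 0) ->
  code_at P pc (comp f n inp out fr pc) ->
  exists R', rsteps P (pc, R) (pc + length (comp f n inp out fr pc), R') /\ R' out = y /\
    (forall x, x < fr -> x <> out -> R' x = R x).

Lemma evals_length gs v ys : evals gs v ys -> length ys = length gs.
Proof. induction 1; simpl; auto. Qed.

Lemma compl_ok P n inp fr' v : length v = n -> 0 < inp ->
  forall gs ys, evals gs v ys -> Forall Spec gs ->
  forall base pc R, inp + n <= base -> base + length gs <= fr' -> R 0 = 0 ->
  (forall k, k < n -> R (inp + k) = nth k v 0) ->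
  code_at P pc (compl (fun g b p => comp g n inp b fr' p) gs base pc) ->
  exists R', rsteps P (pc, R) (pc + length (compl (fun g b p => comp g n inp b fr' p) gs base pc), R') /\
    (forall j, j < length gs -> R' (base + j) = nth j ys 0) /\
    forall x, x < fr' -> (x < base \/ base + length gs <= x) -> R' x = R x.
Proof.
  intros Hl Hi gs ys Hev. induction Hev as [v|g gs v y ys Hg Hgs IH]; intros HF base pc R Hb Hbf H0 Hin Hc.
  - exists R. simpl. rewrite Nat.add_0_r. split; [constructor|]. split; intros; simpl in *; auto. lia.
  - inversion HF as [|? ? Sg SF]; subst. simpl in Hc. simpl length in Hbf.
    destruct (Sg P (length v) inp base fr' pc R v y) as [R1 [S1 [A1 B1]]]; auto; try lia.
    { eapply code_at_l; eauto. }
    destruct (IH eq_refl SF (S base) (pc + length (comp g (length v) inp base fr' pc)) R1) as [R2 [S2 [A2 B2]]]; auto; try lia.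
    { rewrite B1; auto; lia. }
    { intros k Hk. rewrite B1; try lia. auto. }
    { eapply code_at_r; eauto. }
    exists R2. split; [|split].
    + simpl. rewrite length_app, Nat.add_assoc. eapply rsteps_trans; eauto.
    + intros j Hj. destruct j.
      * rewrite B2 by lia. rewrite Nat.add_0_r. auto.
      * simpl. rewrite <- A2 by (simpl in Hj; lia). f_equal. lia.
    + intros x Hx Hx2. simpl length in Hx2. rewrite B2 by lia. rewrite B1 by lia. auto.
Qed.


Lemma code_at_split P pc a b : code_at P pc (a ++ b) -> code_at P pc a /\ code_at P (pc + length a) b.
Proof. intros H. split; [eapply code_at_l; eauto| eapply code_at_r; eauto]. Qed.

Lemma nth_seq0 n j : j < n -> nth j (seq 0 n) 0 = j.
Proof. intros. rewrite seq_nth; auto. Qed.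

Lemma mu_ok P cf n inp out fr pc R v y Fe :
  (forall p R' a z, code_at P p (cf p) -> R' 0 = 0 ->
     (forall i, i < S n -> R' (fr + i) = nth i (a :: v) 0) -> eval Fe (a :: v) z ->
     exists R'', rsteps P (p, R') (p + length (cf p), R'') /\ R'' (fr + n + 1) = z /\
       forall x, x < fr + n + 2 -> x <> fr + n + 1 -> R'' x = R' x) ->
  eval (RMu Fe) v y -> length v = n -> 0 < inp -> inp + n <= fr -> out < fr -> 0 < out -> R 0 = 0 ->
  (forall i, i < n -> R (inp + i) = nth i v 0) ->
  code_at P pc (mu_code cf n inp out fr pc) ->
  exists R', rsteps P (pc, R) (pc + length (mu_code cf n inp out fr pc), R') /\ R' out = y /\
    forall x, x < fr -> x <> out -> R' x = R x.
Proof.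
  intros Hf Hev Hl Hi Hif Ho Ho0 H0 Hin Hc.
  inversion Hev as [| | | | | | ? ? ? Hz Hlt]; subst.
  unfold mu_code in *. cbv zeta in *.
  set (c1 := copies (length v) inp (seq 0 (length v)) (S fr) (fr + length v + 2) pc) in *.
  set (lp := pc + length c1 + 2) in *.
  set (p4 := lp + length (cf lp)) in *.
  set (n := length v) in *.
  destruct (code_at_split _ _ _ _ Hc) as [C1 Hc1].
  destruct (code_at_split _ _ _ _ Hc1) as [C2 Hc2]. simpl length in Hc2.
  destruct (code_at_split _ _ _ _ Hc2) as [C3 Hc3].
  destruct (code_at_split _ _ _ _ Hc3) as [C4 C5]. simpl length in C5.
  inst C4 0. inst C4 1. inst C4 2.
  assert (J0 : nth_error P p4 = Some (JZ (fr + n + 1) (p4 + 3))) by (rewrite <- E; f_equal; unfold p4, lp; lia).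
  assert (J1 : nth_error P (p4 + 1) = Some (INC fr)) by (rewrite <- E0; f_equal; unfold p4, lp; lia).
  assert (J2 : nth_error P (p4 + 2) = Some (JZ 0 lp)) by (rewrite <- E1; f_equal; unfold p4, lp; lia).
  assert (C3' : code_at P lp (cf lp)) by (eapply code_at_eq; [exact C3|unfold lp; lia]).
  assert (C5' : code_at P (p4 + 3) (copy fr out (fr + n + 2) (p4 + 3))) by (eapply code_at_eq; [exact C5|unfold p4, lp; lia]).
  destruct (copies_ok P n inp (fr + n + 2) v eq_refl Hi (seq 0 n) (S fr) pc R) as [R1 [S1 [A1 B1]]]; auto; try lia.
  { rewrite length_seq. lia. }
  rewrite length_seq in A1, B1.
  destruct (clr_ok P (pc + length c1) fr R1 C2) as [R2 [S2 [A2 B2]]]; try lia.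
  { rewrite B1; auto; lia. }
  assert (Inv : forall j, j <= y -> exists Rj, rsteps P (lp, R2) (lp, Rj) /\ Rj fr = j /\
    (forall i, i < n -> Rj (S fr + i) = nth i v 0) /\ (forall x, x < fr -> Rj x = R x)).
  { induction j; intros Hj.
    - exists R2. split; [constructor|]. split; auto. split.
      + intros i Hi'. rewrite B2 by lia. rewrite A1 by lia. rewrite nth_seq0; auto.
      + intros x Hx. rewrite B2 by lia. rewrite B1 by lia. auto.
    - destruct IHj as [Rj [Sj [Aj [Bj Dj]]]]; [lia|].
      destruct (Hlt j) as [k Hk]; [lia|].
      destruct (Hf lp Rj j (S k) C3') as [Ra [Sa [Aa Ba]]]; auto.
      { rewrite Dj by lia. auto. }
      { intros i Hi'. destruct i; simpl. rewrite Nat.add_0_r; auto.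
        rewrite <- Bj by lia. f_equal; lia. }
      set (Rb := updr Ra (fr + n + 1) k).
      set (Rc := updr Rb fr (S (Rb fr))).
      exists Rc. split; [|split; [|split]].
      + eapply rsteps_trans; [exact Sj|]. eapply rsteps_trans; [exact Sa|]. fold p4.
        eapply rsteps_trans. apply s_jzS with (r := fr + n + 1) (j := p4 + 3) (k := k) (pc' := p4 + 1); [exact J0|exact Aa|lia].
        eapply rsteps_trans. apply s_inc with (r := fr) (pc' := p4 + 2); [exact J1|lia].
        apply s_jz0 with (r := 0); [exact J2|]. fold Rb Rc. unfold Rc, Rb. supd. rewrite Ba by lia. rewrite Dj by lia. auto.
      + unfold Rc, Rb. supd. rewrite Ba by lia. lia.
      + intros i Hi'. unfold Rc, Rb. supd. rewrite Ba by lia. auto.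
      + intros x Hx. unfold Rc, Rb. supd. rewrite Ba by lia. auto. }
  destruct (Inv y (le_n _)) as [Ry [Sy [Ay [By Dy]]]].
  destruct (Hf lp Ry y 0 C3') as [Ra [Sa [Aa Ba]]]; auto.
  { rewrite Dy by lia. auto. }
  { intros i Hi'. destruct i; simpl. rewrite Nat.add_0_r; auto.
    rewrite <- By by lia. f_equal; lia. }
  destruct (copy_ok P (p4 + 3) fr out (fr + n + 2) Ra C5') as [Rf [Sf [Af [Bf Df]]]]; try lia.
  { rewrite Ba by lia. rewrite Dy by lia. auto. }
  exists Rf. split; [|split].
  - eapply rsteps_trans; [exact S1|]. eapply rsteps_trans; [exact S2|].
    eapply rsteps_trans; [exact Sy|]. eapply rsteps_trans; [exact Sa|]. fold p4.
    eapply rsteps_trans. apply s_jz0 with (r := fr + n + 1) (j := p4 + 3); [exact J0|exact Aa].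
    replace (pc + length (c1 ++ clr fr (pc + length c1) ++ cf lp ++ [JZ (fr + n + 1) (p4 + 3); INC fr; JZ 0 lp] ++
      copy fr out (fr + n + 2) (p4 + 3))) with (p4 + 3 + 11). exact Sf.
    rewrite !length_app. simpl length. unfold p4, lp. lia.
  - rewrite Af, Ba by lia. auto.
  - intros x Hx Hx2. rewrite Df by lia. rewrite Ba by lia. auto.
Qed.


Lemma prim_down Fe Ge v' : forall k y, eval (RPrim Fe Ge) (k :: v') y ->
  forall j, j <= k -> exists z, eval (RPrim Fe Ge) (j :: v') z.
Proof.
  induction k; intros y H j Hj.
  - assert (j = 0) by lia. subst. eauto.
  - destruct (Nat.eq_dec j (S k)). subst. eauto.
    inversion H; subst. eapply IHk; eauto. lia.
Qed.

Lemma prim_ok P cf cg n' inp out fr pc R n0 v' y Fe Ge :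
  (forall p R' z, code_at P p (cf p) -> R' 0 = 0 ->
     (forall i, i < n' -> R' (fr + 2 + i) = nth i v' 0) -> eval Fe v' z ->
     exists R'', rsteps P (p, R') (p + length (cf p), R'') /\ R'' (S fr) = z /\
       forall x, x < fr + S n' + 3 -> x <> S fr -> R'' x = R' x) ->
  (forall p R' a z w, code_at P p (cg p) -> R' 0 = 0 ->
     (forall i, i < S (S n') -> R' (fr + i) = nth i (a :: z :: v') 0) -> eval Ge (a :: z :: v') w ->
     exists R'', rsteps P (p, R') (p + length (cg p), R'') /\ R'' (fr + S n' + 2) = w /\
       forall x, x < fr + S n' + 3 -> x <> fr + S n' + 2 -> R'' x = R' x) ->
  eval (RPrim Fe Ge) (n0 :: v') y -> length v' = n' -> 0 < inp -> inp + S n' <= fr -> out < fr -> 0 < out ->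
  R 0 = 0 ->
  (forall i, i < S n' -> R (inp + i) = nth i (n0 :: v') 0) ->
  code_at P pc (prim_code cf cg (S n') n' inp out fr pc) ->
  exists R', rsteps P (pc, R) (pc + length (prim_code cf cg (S n') n' inp out fr pc), R') /\ R' out = y /\
    forall x, x < fr -> x <> out -> R' x = R x.
Proof.
  intros Hf Hg Hev Hl Hi Hif Ho Ho0 H0 Hin Hc.
  unfold prim_code in *. cbv zeta in *.
  set (n := S n') in *.
  set (c1 := copies n inp (seq 1 n') (fr + 2) (fr + n + 3) pc) in *.
  set (p2 := pc + length c1) in *.
  set (p4 := p2 + 13) in *.
  set (lp := p4 + length (cf p4)) in *.
  set (p7 := S lp + length (cg (S lp))) in *.
  destruct (code_at_split _ _ _ _ Hc) as [C1 Hc1].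
  destruct (code_at_split _ _ _ _ Hc1) as [C2 Hc2]. rewrite copy_len in Hc2.
  destruct (code_at_split _ _ _ _ Hc2) as [C3 Hc3]. simpl length in Hc3.
  destruct (code_at_split _ _ _ _ Hc3) as [C4 Hc4].
  destruct (code_at_split _ _ _ _ Hc4) as [C5 Hc5]. simpl length in Hc5.
  destruct (code_at_split _ _ _ _ Hc5) as [C6 Hc6].
  destruct (code_at_split _ _ _ _ Hc6) as [C7 Hc7]. simpl length in Hc7.
  destruct (code_at_split _ _ _ _ Hc7) as [C8 Hc8]. simpl length in Hc8.
  destruct (code_at_split _ _ _ _ Hc8) as [C9 C10]. simpl length in C10.
  pose proof (C5 0 (JZ (fr + n + 1) (p7 + 7)) eq_refl) as E.
  pose proof (C9 0 (INC fr) eq_refl) as E0.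
  pose proof (C9 1 (JZ 0 lp) eq_refl) as E1.
  assert (J0 : nth_error P lp = Some (JZ (fr + n + 1) (p7 + 7))) by (rewrite <- E; f_equal; unfold lp, p4, p2; lia).
  assert (J1 : nth_error P (p7 + 5) = Some (INC fr)) by (rewrite <- E0; f_equal; unfold p7, lp, p4, p2; lia).
  assert (J2 : nth_error P (p7 + 6) = Some (JZ 0 lp)) by (rewrite <- E1; f_equal; unfold p7, lp, p4, p2; lia).
  assert (C3' : code_at P (p2 + 11) (clr fr (p2 + 11))) by (eapply code_at_eq; [exact C3|unfold p2; lia]).
  assert (C4' : code_at P p4 (cf p4)) by (eapply code_at_eq; [exact C4|unfold p4, p2; lia]).
  assert (C6' : code_at P (S lp) (cg (S lp))) by (eapply code_at_eq; [exact C6|unfold lp, p4, p2; lia]).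
  assert (C7' : code_at P p7 (clr (S fr) p7)) by (eapply code_at_eq; [exact C7|unfold p7, lp, p4, p2; lia]).
  assert (C8' : code_at P (p7 + 2) (mov (fr + n + 2) (S fr) (p7 + 2))) by (eapply code_at_eq; [exact C8|unfold p7, lp, p4, p2; lia]).
  assert (C10' : code_at P (p7 + 7) (copy (S fr) out (fr + n + 3) (p7 + 7))) by (eapply code_at_eq; [exact C10|unfold p7, lp, p4, p2; lia]).
  destruct (copies_ok P n inp (fr + n + 3) (n0 :: v') ltac:(simpl; lia) Hi (seq 1 n') (fr + 2) pc R) as [R1 [S1 [A1 B1]]]; auto; try lia.
  { rewrite length_seq. lia. }
  rewrite length_seq in A1, B1.
  destruct (copy_ok P p2 inp (fr + n + 1) (fr + n + 3) R1 C2) as [R2 [S2 [A2 [B2 D2]]]]; try lia.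
  { rewrite B1; auto; lia. }
  destruct (clr_ok P (p2 + 11) fr R2 C3') as [R3 [S3 [A3 B3]]]; try lia.
  { rewrite D2 by lia. rewrite B1; auto; lia. }
  destruct (prim_down Fe Ge v' n0 y Hev 0 ltac:(lia)) as [z0 Hz0].
  assert (Hz0' : eval Fe v' z0) by (inversion Hz0; auto).
  destruct (Hf p4 R3 z0 C4') as [R4 [S4 [A4 B4]]]; auto.
  { rewrite B3 by lia. rewrite D2 by lia. rewrite B1; auto; lia. }
  { intros i Hi'. rewrite B3 by lia. rewrite D2 by lia. rewrite A1 by lia. rewrite seq_nth by lia. reflexivity. }
  assert (Inv : forall j, j <= n0 -> exists Rj, rsteps P (lp, R4) (lp, Rj) /\ Rj fr = j /\
    (exists z, eval (RPrim Fe Ge) (j :: v') z /\ Rj (S fr) = z) /\ Rj (fr + n + 1) = n0 - j /\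
    (forall i, i < n' -> Rj (fr + 2 + i) = nth i v' 0) /\ (forall x, x < fr -> Rj x = R x)).
  { induction j; intros Hj.
    - exists R4. split; [constructor|]. split; [|split; [|split; [|split]]].
      + rewrite B4 by lia. auto.
      + exists z0. auto.
      + rewrite B4 by lia. rewrite B3 by lia. rewrite A2. rewrite B1 by lia. pose proof (Hin 0) as Hin0. rewrite Nat.add_0_r in Hin0. rewrite Hin0 by lia.
        simpl. lia.
      + intros i Hi'. rewrite B4 by lia. rewrite B3 by lia. rewrite D2 by lia. rewrite A1 by lia.
        rewrite seq_nth by lia. reflexivity.
      + intros x Hx. rewrite B4 by lia. rewrite B3 by lia. rewrite D2 by lia. rewrite B1 by lia. auto.
    - destruct IHj as [Rj [Sj [Aj [[z [Hz Ez]] [Bj [Dj Fj]]]]]]; [lia|].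
      destruct (prim_down Fe Ge v' n0 y Hev (S j) Hj) as [z' Hz'].
      assert (exists zz, eval (RPrim Fe Ge) (j :: v') zz /\ eval Ge (j :: zz :: v') z') as [zz [Hzz Hgz]]
        by (inversion Hz'; subst; eauto).
      assert (zz = z) by (eapply eval_det; eauto). subst zz.
      set (Ra := updr Rj (fr + n + 1) (n0 - S j)).
      destruct (Hg (S lp) Ra j z z' C6') as [Rb [Sb [Ab Bb]]]; auto.
      { unfold Ra. supd. rewrite Fj by lia. auto. }
      { intros i Hi'. unfold Ra. supd. destruct i as [|[|i]]; simpl.
        - rewrite Nat.add_0_r. auto.
        - rewrite <- Ez. f_equal. lia.
        - rewrite <- Dj by lia. f_equal. lia. }
      destruct (clr_ok P p7 (S fr) Rb C7') as [Rc [Sc [Ac Bc]]]; try lia.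
      { rewrite Bb by lia. unfold Ra. supd. rewrite Fj by lia. auto. }
      destruct (mov_ok P (p7 + 2) (fr + n + 2) (S fr) Rc C8') as [Rd [Sd [Ad [Bd Dd]]]]; try lia.
      { rewrite Bc by lia. rewrite Bb by lia. unfold Ra. supd. rewrite Fj by lia. auto. }
      set (Re := updr Rd fr (S (Rd fr))).
      exists Re. split; [|split; [|split; [|split; [|split]]]].
      + eapply rsteps_trans; [exact Sj|].
        eapply rsteps_trans. apply s_jzS with (r := fr + n + 1) (j := p7 + 7) (k := n0 - S j) (pc' := S lp); [exact J0|lia|lia].
        fold Ra. eapply rsteps_trans; [exact Sb|]. fold p7.
        eapply rsteps_trans; [exact Sc|]. eapply rsteps_trans; [exact Sd|].
        eapply rsteps_trans. apply s_inc with (r := fr) (pc' := p7 + 6); [rewrite <- J1; f_equal; lia|lia].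
        apply s_jz0 with (r := 0); [exact J2|]. fold Re. unfold Re. supd.
        rewrite Dd by lia. rewrite Bc by lia. rewrite Bb by lia. unfold Ra. supd. rewrite Fj by lia. auto.
      + unfold Re. supd. rewrite Dd by lia. rewrite Bc by lia. rewrite Bb by lia. unfold Ra. supd. lia.
      + exists z'. split; auto. unfold Re. supd. rewrite Bd, Ac. rewrite Bc by lia. rewrite Ab. auto.
      + unfold Re. supd. rewrite Dd by lia. rewrite Bc by lia. rewrite Bb by lia. unfold Ra. supd. auto.
      + intros i Hi'. unfold Re. supd. rewrite Dd by lia. rewrite Bc by lia. rewrite Bb by lia. unfold Ra. supd. auto.
      + intros x Hx. unfold Re. supd. rewrite Dd by lia. rewrite Bc by lia. rewrite Bb by lia. unfold Ra. supd. auto. }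
  destruct (Inv n0 (le_n _)) as [Ry [Sy [Ay [[z [Hz Ez]] [By [Dy Fy]]]]]].
  assert (z = y) by (eapply eval_det; eauto). subst z.
  destruct (copy_ok P (p7 + 7) (S fr) out (fr + n + 3) Ry C10') as [Rf [Sf [Af [Bf Df]]]]; try lia.
  { rewrite Fy by lia. auto. }
  exists Rf. split; [|split].
  - eapply rsteps_trans; [exact S1|]. eapply rsteps_trans; [exact S2|].
    eapply rsteps_trans; [exact S3|]. replace (p2 + 11 + 2) with p4 by (unfold p4; lia).
    eapply rsteps_trans; [exact S4|]. fold lp.
    eapply rsteps_trans; [exact Sy|].
    eapply rsteps_trans. apply s_jz0 with (r := fr + n + 1) (j := p7 + 7); [exact J0|rewrite By; lia].
    match goal with |- rsteps _ _ (?a, _) => replace a with (p7 + 7 + 11) end. exact Sf.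
    rewrite !length_app. simpl length. unfold p7, lp, p4, p2. lia.
  - rewrite Af. auto.
  - intros x Hx Hx2. rewrite Df by lia. rewrite Fy by lia. auto.
Qed.


Lemma comp_ok : forall f, Spec f.
Proof.
  induction f using rf_ind'; unfold Spec;
    intros P n inp out fr pc R v y Hev Hl Hi Hif Ho Ho0 Hd H0 Hin Hc.
  - inversion Hev; subst. simpl in *.
    destruct (clr_ok P pc out R Hc) as [R' [S1 [A1 B1]]]; try lia; auto.
    exists R'. split; auto.
  - inversion Hev; subst. simpl comp in *.
    destruct (code_at_split _ _ _ _ Hc) as [C1 C2].
    destruct (getarg_ok P (length v) inp 0 out fr pc R v) as [R1 [S1 [A1 B1]]]; auto.
    pose proof (C2 0 (INC out) eq_refl) as E.
    exists (updr R1 out (S (R1 out))). split; [|split].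
    + rewrite length_app. simpl length. eapply rsteps_trans; [exact S1|].
      apply s_inc; [rewrite <- E; f_equal; lia| lia].
    + rewrite upd_same, A1. destruct v; reflexivity.
    + intros x Hx Hx2. rewrite upd_other by auto. rewrite B1 by lia. auto.
  - inversion Hev; subst. simpl comp in *.
    destruct (getarg_ok P (length v) inp i out fr pc R v) as [R1 [S1 [A1 B1]]]; auto.
    exists R1. split; auto. split; auto. intros x Hx Hx2. rewrite B1 by lia. auto.
  - inversion Hev as [| | |? ? ? ys ? Hevs Hevf| | |]; subst. simpl comp in *.
    set (cg := compl (fun g b p => comp g (length v) inp b (fr + length gs) p) gs fr pc) in *.
    destruct (code_at_split _ _ _ _ Hc) as [C1 C2].
    pose proof (evals_length _ _ _ Hevs) as Hys.
    destruct (compl_ok P (length v) inp (fr + length gs) v eq_refl Hi gs ys Hevs H fr pc R) as [R1 [S1 [A1 B1]]]; auto; try lia.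
    destruct (IHf P (length gs) fr out (fr + length gs) (pc + length cg) R1 ys y) as [R2 [S2 [A2 B2]]]; auto; try lia.
    { rewrite B1; auto; lia. }
    exists R2. split; [|split].
    + rewrite length_app, Nat.add_assoc. eapply rsteps_trans; eauto.
    + auto.
    + intros x Hx Hx2. rewrite B2 by lia. rewrite B1 by lia. auto.
  - destruct v as [|n0 v']; [inversion Hev|].
    simpl length in *. subst n. simpl comp in *.
    eapply prim_ok; eauto.
    + intros p R' z Cp Hr0 Hinp Hevf.
      eapply (IHf1 P (length v') (fr + 2) (S fr) (fr + S (length v') + 3) p R' v' z); eauto; lia.
    + intros p R' a z w Cp Hr0 Hinp Hevg.
      eapply (IHf2 P (S (S (length v'))) fr (fr + S (length v') + 2) (fr + S (length v') + 3) p R' (a :: z :: v') w); eauto; simpl; lia.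
  - subst n. simpl comp in *.
    eapply mu_ok; eauto.
    intros p R' a z Cp Hr0 Hinp Hevf.
    eapply (IHf P (S (length v)) fr (fr + length v + 1) (fr + length v + 2) p R' (a :: v) z); eauto; simpl; lia.
Qed.


Definition ireg (i : instr) := match i with INC r => r | JZ r _ => r end.
Definition maxreg (P : list instr) := fold_right (fun i m => max (ireg i) m) 0 P.
Lemma maxreg_nth P pc i : nth_error P pc = Some i -> ireg i <= maxreg P.
Proof.
  revert pc. induction P; intros pc H; destruct pc; simpl in *; try discriminate.
  - inversion H; subst. lia.
  - specialize (IHP _ H). lia.
Qed.

Definition KK P := 6 + maxreg P.
Definition NN P := KK P + 3.
Definition LL (P : list instr) := length P.

Definition iseq c := match c with CEq => true | _ => false end.
Definition cz (r d : Z) : cmp := if (r <? d)%Z then CGt else if (r =? d)%Z then CEq else CLt.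
Definition cmpvec (Rs : list Z) d := map (fun r => cz r d) Rs.

Definition upd_one P r := map (fun i => if i =? r then UAdd else UOld) (seq 0 (NN P)).
Definition noupd P := map (fun _ : nat => UOld) (seq 0 (NN P)).

Definition rule P (q : nat) (l : list cmp) : list upd * nat :=
  let L := LL P in let K := KK P in
  if q <? L then
    match nth_error P q with
    | Some (INC r) => if iseq (nth K l CLt) then (upd_one P r, S q) else (noupd P, 2 * L + 1)
    | Some (JZ r j) => if iseq (nth (K + 2) l CLt) then
                         (if iseq (nth r l CLt) then (noupd P, Nat.min j L) else (noupd P, L + 1 + q))
                       else (noupd P, 2 * L + 1)
    | None => (noupd P, 2 * L + 1)
    end
  else if q =? L then
    (if andb (iseq (nth K l CLt)) (iseq (nth 5 l CLt)) then (noupd P, 2 * L + 2) else (noupd P, 2 * L + 1))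
  else if q <? 2 * L + 1 then
    match nth_error P (q - (L + 1)) with
    | Some (JZ r j) => if iseq (nth (K + 1) l CLt) then (upd_one P r, q - L) else (noupd P, 2 * L + 1)
    | _ => (noupd P, 2 * L + 1)
    end
  else (noupd P, 2 * L + 1).

Definition mk P q l := mkTrans q 0 l (fst (rule P q l)) 0 0 (snd (rule P q l)).

Fixpoint all_tests (n : nat) : list (list cmp) :=
  match n with
  | 0 => [[]]
  | S n' => flat_map (fun l => [CGt :: l; CEq :: l; CLt :: l]) (all_tests n')
  end.

Definition DeltaP P := flat_map (fun q => map (mk P q) (all_tests (NN P))) (seq 0 (2 * LL P + 2)).

Definition zval P (R : regs) i : Z :=
  if i <? KK P then Z.of_nat (R i) else if i =? KK P then 1%Z else if i =? KK P + 1 then (-1)%Z else 0%Z.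
Definition regsZ P R := map (zval P R) (seq 0 (NN P)).

Definition SRTof P Ri := mkSRT (2 * LL P + 3) 1 1 0 (NN P) (regsZ P Ri) (DeltaP P).

Lemma all_tests_in n l : length l = n -> In l (all_tests n).
Proof.
  revert l; induction n; intros l Hl; destruct l; simpl in *; try lia; auto.
  apply in_flat_map. exists l. split; [apply IHn; lia|]. destruct c; simpl; auto.
Qed.
Lemma all_tests_len n l : In l (all_tests n) -> length l = n.
Proof.
  revert l; induction n; intros l H; simpl in *.
  - destruct H as [<-|[]]; auto.
  - apply in_flat_map in H. destruct H as [l' [H1 H2]]. simpl in H2.
    destruct H2 as [<-|[<-|[<-|[]]]]; simpl; f_equal; auto.
Qed.

Lemma cz_ok c r d : cmp_ok c r d -> c = cz r d.
Proof.
  unfold cz. destruct c; simpl; intros H.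
  - replace (r <? d)%Z with true by (symmetry; apply Z.ltb_lt; lia). auto.
  - subst. rewrite Z.ltb_irrefl, Z.eqb_refl. auto.
  - replace (r <? d)%Z with false by (symmetry; apply Z.ltb_ge; lia).
    replace (r =? d)%Z with false by (symmetry; apply Z.eqb_neq; lia). auto.
Qed.
Lemma cz_ok2 r d : cmp_ok (cz r d) r d.
Proof.
  unfold cz. destruct (Z.ltb_spec r d); simpl; [lia|]. destruct (Z.eqb_spec r d); simpl; lia.
Qed.

Lemma tests_cmpvec l Rs d : tests_ok l Rs d -> l = cmpvec Rs d.
Proof. induction 1; simpl; auto. f_equal; auto. apply cz_ok; auto. Qed.
Lemma tests_cmpvec2 Rs d : tests_ok (cmpvec Rs d) Rs d.
Proof. induction Rs; simpl; constructor; auto. apply cz_ok2. Qed.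

Lemma iseq_cz r d : iseq (cz r d) = (r =? d)%Z.
Proof.
  unfold cz. destruct (Z.ltb_spec r d).
  - simpl. symmetry. apply Z.eqb_neq. lia.
  - destruct (Z.eqb_spec r d); auto.
Qed.

Lemma nth_map_seq {A} (f : nat -> A) N i dflt : i < N -> nth i (map f (seq 0 N)) dflt = f i.
Proof.
  intros H. rewrite nth_indep with (d' := f 0) by (rewrite length_map, length_seq; auto).
  rewrite map_nth, seq_nth; auto.
Qed.

Lemma nth_cmpvec P R d i : i < NN P -> iseq (nth i (cmpvec (regsZ P R) d) CLt) = (zval P R i =? d)%Z.
Proof.
  intros H. unfold cmpvec, regsZ. rewrite map_map. rewrite nth_map_seq; auto. apply iseq_cz.
Qed.

Lemma update_map_seq g h (l : list nat) d :
  update (map g l) (map h l) d = map (fun i => upd_val (g i) (h i) d) l.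
Proof. induction l; simpl; auto. unfold update in *. simpl. f_equal. auto. Qed.

Lemma length_update m Rs d : length (update m Rs d) = Nat.min (length m) (length Rs).
Proof. unfold update. rewrite length_map, length_combine. auto. Qed.

Lemma update_noupd_gen Rs k d : update (map (fun _ : nat => UOld) (seq k (length Rs))) Rs d = Rs.
Proof.
  revert k. induction Rs; intros k; simpl; auto. unfold update in *. simpl. f_equal. auto.
Qed.
Lemma update_noupd P Rs d : length Rs = NN P -> update (noupd P) Rs d = Rs.
Proof. intros H. unfold noupd. rewrite <- H. apply update_noupd_gen. Qed.

Lemma length_regsZ P R : length (regsZ P R) = NN P.
Proof. unfold regsZ. rewrite length_map, length_seq. auto. Qed.

Lemma length_rule P q l : length (fst (rule P q l)) = NN P.
Proof.
  assert (A : forall r, length (upd_one P r) = NN P) by (intros; unfold upd_one; rewrite length_map, length_seq; auto).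
  assert (B : length (noupd P) = NN P) by (unfold noupd; rewrite length_map, length_seq; auto).
  unfold rule; cbv zeta.
  destruct (q <? LL P).
  - destruct (nth_error P q) as [[r|r j]|]; [destruct (iseq _)|destruct (iseq _); [destruct (iseq _)|]|]; simpl fst; auto.
  - destruct (q =? LL P); [destruct (andb _ _); simpl fst; auto|].
    destruct (q <? _); [|simpl fst; auto].
    destruct (nth_error _ _) as [[r|r j]|]; [| destruct (iseq _)|]; simpl fst; auto.
Qed.

Lemma update_inc P R r : r < KK P ->
  update (upd_one P r) (regsZ P R) 1%Z = regsZ P (updr R r (S (R r))).
Proof.
  intros Hr. unfold upd_one, regsZ. rewrite update_map_seq. apply map_ext_in. intros i Hi.
  apply in_seq in Hi. unfold zval. destruct (Nat.eqb_spec i r).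
  - subst. rewrite upd_same. replace (r <? KK P) with true by (symmetry; apply Nat.ltb_lt; auto).
    simpl. lia.
  - rewrite upd_other by auto. simpl. auto.
Qed.

Lemma update_dec P R r k : r < KK P -> R r = S k ->
  update (upd_one P r) (regsZ P R) (-1)%Z = regsZ P (updr R r k).
Proof.
  intros Hr Hk. unfold upd_one, regsZ. rewrite update_map_seq. apply map_ext_in. intros i Hi.
  apply in_seq in Hi. unfold zval. destruct (Nat.eqb_spec i r).
  - subst. rewrite upd_same. replace (r <? KK P) with true by (symmetry; apply Nat.ltb_lt; auto).
    simpl. rewrite Hk. lia.
  - rewrite upd_other by auto. simpl. auto.
Qed.

Lemma zval_K P R : zval P R (KK P) = 1%Z.
Proof. unfold zval. rewrite Nat.ltb_irrefl, Nat.eqb_refl. auto. Qed.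
Lemma zval_K1 P R : zval P R (KK P + 1) = (-1)%Z.
Proof. unfold zval. replace (KK P + 1 <? KK P) with false by (symmetry; apply Nat.ltb_ge; lia).
  replace (KK P + 1 =? KK P) with false by (symmetry; apply Nat.eqb_neq; lia). rewrite Nat.eqb_refl. auto. Qed.
Lemma zval_K2 P R : zval P R (KK P + 2) = 0%Z.
Proof. unfold zval. replace (KK P + 2 <? KK P) with false by (symmetry; apply Nat.ltb_ge; lia).
  replace (KK P + 2 =? KK P) with false by (symmetry; apply Nat.eqb_neq; lia).
  replace (KK P + 2 =? KK P + 1) with false by (symmetry; apply Nat.eqb_neq; lia). auto. Qed.
Lemma zval_lt P R i : i < KK P -> zval P R i = Z.of_nat (R i).
Proof. intros. unfold zval. replace (i <? KK P) with true by (symmetry; apply Nat.ltb_lt; auto). auto. Qed.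


Lemma step_inv P Ri q Rs s d b c' : step (SRTof P Ri) (q, Rs) (s, d) b c' ->
  q < 2 * LL P + 2 /\ s = 0 /\
  c' = (snd (rule P q (cmpvec Rs d)), update (fst (rule P q (cmpvec Rs d))) Rs d).
Proof.
  intros [t [Hin [Hsrc [Hin' [Hlt [Hte [Hlu [Hc' [Hb1 [Hb2 Hc'']]]]]]]]]].
  simpl in *. unfold DeltaP in Hin. apply in_flat_map in Hin. destruct Hin as [q' [Hq' Ht]].
  apply in_map_iff in Ht. destruct Ht as [l [<- Hl]]. unfold mk in *; simpl in *. subst.
  apply tests_cmpvec in Hte. subst l. apply in_seq in Hq'. destruct c' as [q'' R'']. simpl in *. subst.
  split; [lia|]. split; auto.
Qed.

Lemma progress P Ri q Rs d : q < 2 * LL P + 2 -> length Rs = NN P ->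
  exists b c', step (SRTof P Ri) (q, Rs) (0, d) b c'.
Proof.
  intros Hq Hl.
  set (c' := (snd (rule P q (cmpvec Rs d)), update (fst (rule P q (cmpvec Rs d))) Rs d)).
  exists (0, nth 0 (snd c') 0%Z), c'. exists (mk P q (cmpvec Rs d)).
  simpl. unfold mk; simpl. split; [|split; [auto|split; [auto|split; [|split; [|split; [|split; [|split]]]]]]]; auto.
  - unfold DeltaP. apply in_flat_map. exists q. split; [apply in_seq; lia|].
    apply in_map_iff. exists (cmpvec Rs d). split; [reflexivity|]. apply all_tests_in. unfold cmpvec. rewrite length_map. auto.
  - unfold cmpvec. rewrite length_map. auto.
  - apply tests_cmpvec2.
  - rewrite length_rule. auto.
Qed.

Lemma KK5 P : 5 < KK P.
Proof. unfold KK. lia. Qed.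

Lemma nth_some_lt (P : list instr) pc i : nth_error P pc = Some i -> pc < LL P.
Proof. intros H. apply nth_error_Some. congruence. Qed.

Lemma rule_inc P R pc r d : nth_error P pc = Some (INC r) ->
  rule P pc (cmpvec (regsZ P R) d) = if (1 =? d)%Z then (upd_one P r, S pc) else (noupd P, 2 * LL P + 1).
Proof.
  intros H. pose proof (nth_some_lt _ _ _ H). unfold rule; cbv zeta.
  replace (pc <? LL P) with true by (symmetry; apply Nat.ltb_lt; auto). rewrite H.
  rewrite nth_cmpvec by (unfold NN; lia). rewrite zval_K. auto.
Qed.

Lemma rule_jz P R pc r j d : nth_error P pc = Some (JZ r j) ->
  rule P pc (cmpvec (regsZ P R) d) =
  if (0 =? d)%Z then (if (Z.of_nat (R r) =? d)%Z then (noupd P, Nat.min j (LL P)) else (noupd P, LL P + 1 + pc))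
  else (noupd P, 2 * LL P + 1).
Proof.
  intros H. pose proof (nth_some_lt _ _ _ H). pose proof (maxreg_nth _ _ _ H) as Hm. simpl in Hm.
  unfold rule; cbv zeta.
  replace (pc <? LL P) with true by (symmetry; apply Nat.ltb_lt; auto). rewrite H.
  rewrite nth_cmpvec by (unfold NN; lia). rewrite zval_K2.
  rewrite nth_cmpvec by (unfold NN, KK; lia). rewrite zval_lt by (unfold KK; lia). auto.
Qed.

Lemma rule_halt P R d :
  rule P (LL P) (cmpvec (regsZ P R) d) =
  if andb (1 =? d)%Z (Z.of_nat (R 5%nat) =? d)%Z then (noupd P, 2 * LL P + 2) else (noupd P, 2 * LL P + 1).
Proof.
  unfold rule; cbv zeta. rewrite Nat.ltb_irrefl, Nat.eqb_refl.
  rewrite nth_cmpvec by (unfold NN; lia). rewrite zval_K.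
  rewrite nth_cmpvec by (unfold NN, KK; lia). rewrite zval_lt by (unfold KK; lia). auto.
Qed.

Lemma rule_aux P R pc r j d : nth_error P pc = Some (JZ r j) ->
  rule P (LL P + 1 + pc) (cmpvec (regsZ P R) d) =
  if ((-1) =? d)%Z then (upd_one P r, S pc) else (noupd P, 2 * LL P + 1).
Proof.
  intros H. pose proof (nth_some_lt _ _ _ H). unfold rule; cbv zeta.
  replace (LL P + 1 + pc <? LL P) with false by (symmetry; apply Nat.ltb_ge; lia).
  replace (LL P + 1 + pc =? LL P) with false by (symmetry; apply Nat.eqb_neq; lia).
  replace (LL P + 1 + pc <? 2 * LL P + 1) with true by (symmetry; apply Nat.ltb_lt; lia).
  replace (LL P + 1 + pc - (LL P + 1)) with pc by lia. rewrite H.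
  rewrite nth_cmpvec by (unfold NN; lia). rewrite zval_K1.
  replace (LL P + 1 + pc - LL P) with (S pc) by lia. auto.
Qed.

Lemma rule_sink P l : rule P (2 * LL P + 1) l = (noupd P, 2 * LL P + 1).
Proof.
  unfold rule; cbv zeta.
  replace (2 * LL P + 1 <? LL P) with false by (symmetry; apply Nat.ltb_ge; lia).
  replace (2 * LL P + 1 =? LL P) with false by (symmetry; apply Nat.eqb_neq; lia).
  replace (2 * LL P + 1 <? 2 * LL P + 1) with false by (symmetry; apply Nat.ltb_ge; lia). auto.
Qed.

Definition reach P Ri (c : cfg) := rsteps P (0, Ri) c.

Lemma rsteps_snoc P c1 c2 c3 : rsteps P c1 c2 -> rstep P c2 c3 -> rsteps P c1 c3.
Proof. intros. eapply rsteps_trans; eauto. econstructor; eauto. constructor. Qed.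

Definition Inv P Ri (c : config) : Prop :=
  (exists pc R, reach P Ri (pc, R) /\ fst c = Nat.min pc (LL P) /\ snd c = regsZ P R) \/
  (exists pc R r j k, reach P Ri (pc, R) /\ nth_error P pc = Some (JZ r j) /\ R r = S k /\
      fst c = LL P + 1 + pc /\ snd c = regsZ P R) \/
  (fst c = 2 * LL P + 1 /\ length (snd c) = NN P) \/
  (fst c = 2 * LL P + 2 /\ exists pc R, reach P Ri (pc, R) /\ nth_error P pc = None /\ R 5 = 1).

Lemma Inv_step P Ri c a b c' : Inv P Ri c -> step (SRTof P Ri) c a b c' -> Inv P Ri c'.
Proof.
  destruct c as [q Rs]. destruct a as [s d]. intros HI Hs.
  destruct (step_inv _ _ _ _ _ _ _ _ Hs) as [Hq [Hs0 Hc']]. subst c'. simpl.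
  assert (Sink : forall Rs', length Rs' = NN P -> Inv P Ri (2 * LL P + 1, update (noupd P) Rs' d)).
  { intros Rs' HR. right; right; left. simpl. split; auto. rewrite update_noupd; auto. }
  destruct HI as [[pc [R [Hr [Hq' HR]]]]|[[pc [R [r [j [k [Hr [E [Hk [Hq' HR]]]]]]]]]|[[Hq' HR]|[Hq' HR]]]];
    simpl in Hq', HR; subst q; try subst Rs.
  - destruct (Nat.lt_ge_cases pc (LL P)) as [Hlt|Hge].
    + rewrite Nat.min_l by lia.
      destruct (nth_error P pc) as [[r|r j]|] eqn:E.
      * rewrite (rule_inc _ _ _ _ _ E). destruct (Z.eqb_spec 1 d); simpl.
        -- subst d. pose proof (maxreg_nth _ _ _ E). simpl in *.
           rewrite update_inc by (unfold KK; lia). left. exists (S pc), (updr R r (S (R r))).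
           split; [eapply rsteps_snoc; [exact Hr| constructor; auto]|].
           split; cbn [fst snd]; [rewrite Nat.min_l by lia|]; auto.
        -- apply Sink. apply length_regsZ.
      * rewrite (rule_jz _ _ _ _ _ _ E). destruct (Z.eqb_spec 0 d); [|apply Sink, length_regsZ].
        subst d. destruct (Z.eqb_spec (Z.of_nat (R r)) 0); simpl; rewrite update_noupd by apply length_regsZ.
        -- left. exists j, R. split; [eapply rsteps_snoc; [exact Hr| apply st_jz0 with r; auto; lia]|]. auto.
        -- right; left. destruct (R r) as [|k] eqn:Hk; [simpl in *; lia|].
           exists pc, R, r, j, k. repeat split; auto.
      * apply nth_error_None in E. unfold LL in *; lia.
    + rewrite Nat.min_r by lia. rewrite rule_halt.
      destruct (Z.eqb_spec 1 d); destruct (Z.eqb_spec (Z.of_nat (R 5)) d); simpl;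
        try (apply Sink, length_regsZ).
      right; right; right. split; auto. exists pc, R. split; auto. split; [apply nth_error_None; unfold LL in *; lia| lia].
  - rewrite (rule_aux _ _ _ _ _ _ E). destruct (Z.eqb_spec (-1) d); simpl; [|apply Sink, length_regsZ].
    subst d. pose proof (maxreg_nth _ _ _ E). pose proof (nth_some_lt _ _ _ E). simpl in *.
    rewrite (update_dec P R r k) by (unfold KK; lia; auto). left. exists (S pc), (updr R r k).
    split; [eapply rsteps_snoc; [exact Hr| eapply st_jzS; eauto]|].
    split; cbn [fst snd]; [rewrite Nat.min_l by lia|]; auto.
  - rewrite rule_sink. simpl. apply Sink. auto.
  - lia.
Qed.

Lemma runs_or_halt P Ri : forall s c, Inv P Ri c -> Forall (fun a => fst a < 1) s ->
  (exists t, length t = length s /\ run_from (SRTof P Ri) c s t) \/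
  (exists pc R, reach P Ri (pc, R) /\ nth_error P pc = None /\ R 5 = 1).
Proof.
  induction s as [|[sg d] s IH]; intros c HI Hf.
  - left. exists []. split; auto. constructor.
  - inversion Hf as [|? ? Ha Hf']; subst. simpl in Ha. assert (sg = 0) by lia. subst sg.
    destruct c as [q Rs].
    destruct (Nat.eq_dec q (2 * LL P + 2)) as [Hd|Hd].
    + right. destruct HI as [[pc [R [Hr [Hq' HR]]]]|[[pc [R [r [j [k [Hr [E [Hk [Hq' HR]]]]]]]]]|[[Hq' HR]|[Hq' H]]]];
        simpl in *; try lia; auto.
      all: try (pose proof (Nat.le_min_r pc (LL P)); lia); try (pose proof (nth_some_lt _ _ _ E); lia).
    + assert (Hq : q < 2 * LL P + 2 /\ length Rs = NN P).
      { destruct HI as [[pc [R [Hr [Hq' HR]]]]|[[pc [R [r [j [k [Hr [E [Hk [Hq' HR]]]]]]]]]|[[Hq' HR]|[Hq' H]]]];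
          simpl in *; subst; try rewrite length_regsZ; try lia; auto.
        all: try (pose proof (Nat.le_min_r pc (LL P)); lia); try (pose proof (nth_some_lt _ _ _ E); lia). }
      destruct Hq as [Hq HL].
      destruct (progress P Ri q Rs d Hq HL) as [b [c' Hst]].
      destruct (IH c' (Inv_step _ _ _ _ _ _ HI Hst) Hf') as [[t [Ht Hr]]|Hh]; [|right; auto].
      left. exists (b :: t). split; [simpl; auto|]. econstructor; eauto.
Qed.

Lemma fwd P Ri : forall c ch, rsteps P c ch -> nth_error P (fst ch) = None -> snd ch 5 = 1 ->
  exists s, Forall (fun a => fst a < 1) s /\
    forall t, ~ run_from (SRTof P Ri) (Nat.min (fst c) (LL P), regsZ P (snd c)) s t.
Proof.
  induction 1 as [[pc R]|c1 c2 c3 Hst Hss IH]; intros Hh H5; simpl in *.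
  - exists [(0, 1%Z); (0, 0%Z)]. split; [repeat constructor; simpl; lia|].
    intros t Hrun. apply nth_error_None in Hh. rewrite Nat.min_r in Hrun by auto.
    inversion Hrun as [|? ? b c' ? t' Hs1 Hr1]; subst.
    destruct (step_inv _ _ _ _ _ _ _ _ Hs1) as [_ [_ Hc']]. rewrite rule_halt in Hc'.
    rewrite H5 in Hc'. simpl in Hc'. subst c'.
    inversion Hr1 as [|? ? b2 c2 ? t2 Hs2 Hr2]; subst.
    destruct (step_inv _ _ _ _ _ _ _ _ Hs2) as [Hq _]. simpl in Hq. lia.
  - destruct (IH Hh H5) as [s2 [Hf2 Hn2]].
    destruct Hst as [pc R r E|pc R r j E Hr|pc R r j k E Hr]; cbn [fst snd] in *.
    + exists ((0, 1%Z) :: s2). split; [constructor; simpl; auto; lia|].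
      intros t Hrun. pose proof (nth_some_lt _ _ _ E). rewrite Nat.min_l in Hrun by lia.
      inversion Hrun as [|? ? b c' ? t' Hs1 Hr1]; subst.
      destruct (step_inv _ _ _ _ _ _ _ _ Hs1) as [_ [_ Hc']]. rewrite (rule_inc _ _ _ _ _ E) in Hc'.
      rewrite Z.eqb_refl in Hc'. cbn [fst snd] in Hc'. pose proof (maxreg_nth _ _ _ E) as Hm. simpl in Hm.
      rewrite update_inc in Hc' by (unfold KK; lia). subst c'.
      rewrite Nat.min_l in Hn2 by lia. eapply Hn2; eauto.
    + exists ((0, 0%Z) :: s2). split; [constructor; simpl; auto; lia|].
      intros t Hrun. pose proof (nth_some_lt _ _ _ E). rewrite Nat.min_l in Hrun by lia.
      inversion Hrun as [|? ? b c' ? t' Hs1 Hr1]; subst.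
      destruct (step_inv _ _ _ _ _ _ _ _ Hs1) as [_ [_ Hc']]. rewrite (rule_jz _ _ _ _ _ _ E) in Hc'.
      rewrite Hr in Hc'. change (Z.of_nat 0) with 0%Z in Hc'. rewrite Z.eqb_refl in Hc'. cbn [fst snd] in Hc'.
      rewrite update_noupd in Hc' by apply length_regsZ. subst c'.
      eapply Hn2; eauto.
    + exists ((0, 0%Z) :: (0, (-1)%Z) :: s2). split; [repeat constructor; simpl; auto; lia|].
      intros t Hrun. pose proof (nth_some_lt _ _ _ E). rewrite Nat.min_l in Hrun by lia.
      inversion Hrun as [|? ? b c' ? t' Hs1 Hr1]; subst.
      destruct (step_inv _ _ _ _ _ _ _ _ Hs1) as [_ [_ Hc']]. rewrite (rule_jz _ _ _ _ _ _ E) in Hc'.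
      rewrite Hr in Hc'. rewrite Z.eqb_refl in Hc'.
      replace (Z.of_nat (S k) =? 0)%Z with false in Hc' by (symmetry; apply Z.eqb_neq; lia). cbn [fst snd] in Hc'.
      rewrite update_noupd in Hc' by apply length_regsZ. subst c'.
      inversion Hr1 as [|? ? b2 c2 ? t2 Hs2 Hr2]; subst.
      destruct (step_inv _ _ _ _ _ _ _ _ Hs2) as [_ [_ Hc2]]. rewrite (rule_aux _ _ _ _ _ _ E) in Hc2.
      rewrite Z.eqb_refl in Hc2. cbn [fst snd] in Hc2. pose proof (maxreg_nth _ _ _ E) as Hm. simpl in Hm.
      rewrite (update_dec P R r k) in Hc2 by (unfold KK; lia; auto). subst c2.
      rewrite Nat.min_l in Hn2 by lia. eapply Hn2; eauto.
Qed.

Lemma rstep_det P c c1 c2 : rstep P c c1 -> rstep P c c2 -> c1 = c2.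
Proof.
  intros H1 H2. inversion H1; subst; inversion H2; subst; congruence.
Qed.

Lemma halted_det P c c1 c2 : rsteps P c c1 -> rsteps P c c2 ->
  nth_error P (fst c1) = None -> nth_error P (fst c2) = None -> c1 = c2.
Proof.
  intros H. revert c2. induction H as [c|c c' c1 Hs Hss IH]; intros c2 H2 N1 N2.
  - inversion H2 as [|? c'' ? Hs' Hss']; subst; auto.
    inversion Hs'; subst; simpl in N1; congruence.
  - inversion H2 as [|? c'' ? Hs' Hss']; subst.
    + inversion Hs; subst; simpl in N2; congruence.
    + assert (c' = c'') by (eapply rstep_det; eauto). subst. auto.
Qed.


Lemma rule_dst P q l : snd (rule P q l) <= 2 * LL P + 2.
Proof.
  unfold rule; cbv zeta.
  destruct (Nat.ltb_spec q (LL P)).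
  - destruct (nth_error P q) as [[r|r j]|]; [destruct (iseq _)|destruct (iseq _); [destruct (iseq _)|]|]; simpl snd; lia.
  - destruct (q =? LL P); [destruct (andb _ _); simpl snd; lia|].
    destruct (Nat.ltb_spec q (2 * LL P + 1)); [|simpl snd; lia].
    destruct (nth_error _ _) as [[r|r j]|]; [| destruct (iseq _)|]; simpl snd; lia.
Qed.

Lemma in_Delta P t : In t (DeltaP P) -> exists q l, q < 2 * LL P + 2 /\ In l (all_tests (NN P)) /\ t = mk P q l.
Proof.
  unfold DeltaP. intros H. apply in_flat_map in H. destruct H as [q [Hq Ht]].
  apply in_map_iff in Ht. destruct Ht as [l [<- Hl]]. apply in_seq in Hq. exists q, l. split; [lia|auto].
Qed.

Lemma wf_SRTof P Ri : wf_SRT (SRTof P Ri).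
Proof.
  unfold wf_SRT; simpl. split; [lia|]. split; [apply length_regsZ|].
  apply Forall_forall. intros t Ht. destruct (in_Delta _ _ Ht) as [q [l [Hq [Hl ->]]]].
  unfold mk; simpl. pose proof (rule_dst P q l). pose proof (all_tests_len _ _ Hl).
  rewrite length_rule. unfold NN in *. repeat split; lia.
Qed.

Lemma det_SRTof P Ri : deterministic (SRTof P Ri).
Proof.
  intros t1 t2 H1 H2 Hne Heq. simpl in H1, H2.
  destruct (in_Delta _ _ H1) as [q1 [l1 [_ [_ ->]]]].
  destruct (in_Delta _ _ H2) as [q2 [l2 [_ [_ ->]]]].
  unfold mk in Heq; simpl in Heq. inversion Heq; subst. apply Hne. reflexivity.
Qed.

Lemma combine_fst_snd {A B} (s : list A) (t : list B) : length t = length s ->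
  map fst (combine s t) = s /\ map snd (combine s t) = t.
Proof.
  revert t; induction s; intros t Ht; destruct t; simpl in *; try lia; auto.
  destruct (IHs t) as [H1 H2]; [lia|]. rewrite H1, H2. auto.
Qed.

Definition qrf p := RComp p [Enc].
Definition Ptop p := comp (qrf p) 4 1 5 6 0.
Definition Rini (a1 a2 a3 a4 : nat) : regs := fun i => nth i [0; a1; a2; a3; a4] 0.
Definition A1 P := 2 * LL P + 3.
Definition A2 P := NN P.
Definition A3 P := enc_list enc_trans (DeltaP P).
Definition A4 P := KK P - 5.
Definition RiP P := Rini (A1 P) (A2 P) (A3 P) (A4 P).

Lemma regsZ_init P : regsZ P (RiP P) =
  map Z.of_nat [0; A1 P; A2 P; A3 P; A4 P] ++ repeat 0%Z (A4 P) ++ [1%Z; (-1)%Z; 0%Z].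
Proof.
  unfold regsZ. replace (NN P) with (5 + (A4 P + 3)) by (unfold NN, A4, KK; lia).
  rewrite !seq_app, !map_app. apply (f_equal2 (@app Z)); [|apply (f_equal2 (@app Z))].
  - simpl seq. simpl map. rewrite !zval_lt by (unfold KK; lia). reflexivity.
  - rewrite <- (length_seq (A4 P) (0 + 5)) at 2. rewrite <- map_const. apply map_ext_in.
    intros i Hi. apply in_seq in Hi. rewrite zval_lt by (unfold A4, KK in *; lia).
    unfold RiP, Rini. rewrite nth_overflow by (simpl; lia). reflexivity.
  - replace (0 + 5 + A4 P) with (KK P) by (unfold A4, KK; lia). simpl seq.
    replace (S (KK P)) with (KK P + 1) by lia. replace (S (KK P + 1)) with (KK P + 2) by lia.
    simpl map. rewrite zval_K, zval_K1, zval_K2. reflexivity.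
Qed.

Lemma encode_eq P : encode_SRT (SRTof P (RiP P)) = encv (A1 P) (A2 P) (A3 P) (A4 P).
Proof.
  unfold encode_SRT, encv, SRTof. cbn [nQ nSig nGam q0 nreg R0 Defs.Delta].
  rewrite regsZ_init. unfold A1, A2, A3. reflexivity.
Qed.

Lemma run_top p y : let P := Ptop p in
  eval p [encv (A1 P) (A2 P) (A3 P) (A4 P)] y ->
  exists R', rsteps P (0, RiP P) (LL P, R') /\ R' 5 = y.
Proof.
  intros P He.
  assert (Hq : eval (qrf p) [A1 P; A2 P; A3 P; A4 P] y).
  { econstructor; [|exact He]. constructor; [apply ev_Enc|constructor]. }
  destruct (comp_ok (qrf p) P 4 1 5 6 0 (RiP P) _ y Hq) as [R' [Hs [H5 _]]].
  - reflexivity.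
  - lia.
  - lia.
  - lia.
  - lia.
  - right; lia.
  - reflexivity.
  - intros i Hi. unfold RiP, Rini. destruct i as [|[|[|[|i]]]]; cbn [nth Nat.add]; try reflexivity; exfalso; lia.
  - intros i x E. exact E.
  - exists R'. split; [exact Hs|exact H5].
Qed.


Theorem theorem5p12 :
  ~ exists p : rf,
      forall S : SRT, wf_SRT S -> deterministic S ->
        (reactive S -> eval p [encode_SRT S] 1) /\
        (~ reactive S -> eval p [encode_SRT S] 0).
Proof.
  intros [p Hp].
  pose proof (run_top p) as RT. cbv zeta in RT.
  pose proof (Hp (SRTof (Ptop p) (RiP (Ptop p))) (wf_SRTof _ _) (det_SRTof _ _)) as [H1 H0].
  rewrite encode_eq in H1, H0.
  generalize dependent (RiP (Ptop p)). intros Ri RT H1 H0.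
  generalize dependent (Ptop p). intros P RT H1 H0.
  generalize dependent (encv (A1 P) (A2 P) (A3 P) (A4 P)). intros E RT H1 H0.
  assert (NR : ~ reactive (SRTof P Ri)).
  { intros HR. destruct (RT 1 (H1 HR)) as [R' [Hs H5]].
    destruct (fwd P Ri (0, Ri) (LL P, R') Hs) as [s [Hf Hn]].
    { cbn [fst]. apply nth_error_None. unfold LL. lia. }
    { cbn [snd]. auto. }
    destruct (HR s Hf) as [t [Hlt Hsem]]. unfold sem in Hsem.
    destruct (combine_fst_snd s t Hlt) as [E1 E2]. rewrite E1, E2 in Hsem.
    cbn [fst snd] in Hn. rewrite Nat.min_0_l in Hn. apply (Hn t). exact Hsem. }
  destruct (RT 0 (H0 NR)) as [R0' [Hs0 H50]].
  apply NR. intros s Hf.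
  assert (HI : Inv P Ri (0, regsZ P Ri)).
  { left. exists 0, Ri. split; [constructor|]. cbn [fst snd]. rewrite Nat.min_0_l. auto. }
  destruct (runs_or_halt P Ri s _ HI Hf) as [[t [Hl Hr]]|[pc [R [Hr [Hn H5]]]]].
  - exists t. split; auto. unfold sem.
    destruct (combine_fst_snd s t Hl) as [E1 E2]. rewrite E1, E2. exact Hr.
  - exfalso.
    assert (Heq : (pc, R) = (LL P, R0')).
    { eapply halted_det; [exact Hr|exact Hs0|exact Hn|]. cbn [fst]. apply nth_error_None. unfold LL. lia. }
    inversion Heq; subst. lia.
Qed.
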